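(* Let $b>0$. For $R>0$ define, for $r>0$, \[ \begin{aligned} \underline u_{\rm out}(r) &= Lr^{-m} - br^{-l} \log \frac{r}{R},\\ \underline v_{\rm out}(r) &= m(n-2-m)Lr^{-m-2} +\Big[- l(n-2-l) \log \frac{r}{R} + (n-2-2l)\Big]br^{-l-2},\\ \underline w_{\rm out}(r) &= m(m+2)(n-2-m)(n-4-m)Lr^{-m-4} - l(l+2)(n-2-l)(n-4-l)br^{-l-4} \log \frac{r}{R} \\ &\qquad + (n-2-2l)(l+2)(n-4-l) b r^{-l-4}, \end{aligned} \] and \[ \underline r_1 = \sup\{ r>0 : \underline u_{\rm out}(r) \leqslant 0 \},\quad \underline r_2 = \sup\{ r>0 : \underline v_{\rm out}(r) \leqslant 0 \},\quad \underline r_3 = \sup\{ r>0 : \underline w_{\rm out}(r) \leqslant 0 \}. \] Then there exists $R>0$ such that $\underline r_1,\underline r_2,\underline r_3$ are well defined and \[ R<\underline r_1<\underline r_2<\underline r_3<+\infty . \]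
   Context: Let $n\geqslant 15$ and $p=p_{\mathsf{JL}}(6,n)$, where $p_{\mathsf{JL}}(6,n)=\frac{(n+4)\sqrt{3} - \sqrt{\sqrt[3]{K_0+K_1}+ \sqrt[3]{K_0-K_1} + 3n^2+32 }}{(n-8)\sqrt{3} - \sqrt{\sqrt[3]{K_0+K_1} + \sqrt[3]{K_0-K_1} + 3n^2+32 }}$ with $2K_0 =-27n^6+324 n^5-756n^4-2592 n^3 + 25776 n^2 +5184 n -23744$, $2K_1 = \sqrt{(2K_0)^2 - 4(192n^2+256)^3}$. Let $m=6/(p-1)$, $L=\big(m(m+2)(m+4)(n-2-m)(n-4-m)(n-6-m)\big)^{1/(p-1)}$, let $\lambda_3$ be the smallest positive root of $P(\lambda)=(m+\lambda)(m+\lambda+2)(m+\lambda+4)(n-2-m-\lambda)(n-4-m-\lambda)(n-6-m-\lambda)-pL^{p-1}$, and set $l=m+\lambda_3$. *)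

(* Defs.v *)
From Stdlib Require Import Reals Lra.
Open Scope R_scope.

Definition cbrt (x : R) : R :=
  if Rlt_dec 0 x then Rpower x (1/3)
  else if Rlt_dec x 0 then - Rpower (- x) (1/3) else 0.

Definition K0 (n : R) : R :=
  (-27*n^6 + 324*n^5 - 756*n^4 - 2592*n^3 + 25776*n^2 + 5184*n - 23744) / 2.
Definition K1 (n : R) : R :=
  sqrt ((2 * K0 n)^2 - 4 * (192*n^2 + 256)^3) / 2.

Definition pJL6 (n : R) : R :=
  let s := sqrt (cbrt (K0 n + K1 n) + cbrt (K0 n - K1 n) + 3*n^2 + 32) in
  ((n + 4) * sqrt 3 - s) / ((n - 8) * sqrt 3 - s).

Definition mexp (n : R) : R := 6 / (pJL6 n - 1).

Definition Lconst (n : R) : R :=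
  let m := mexp n in
  Rpower (m*(m+2)*(m+4)*(n-2-m)*(n-4-m)*(n-6-m)) (1 / (pJL6 n - 1)).

Definition Ppoly (n lam : R) : R :=
  let m := mexp n in
  (m+lam)*(m+lam+2)*(m+lam+4)*(n-2-m-lam)*(n-4-m-lam)*(n-6-m-lam)
  - pJL6 n * Rpower (Lconst n) (pJL6 n - 1).

Definition u_out (n l b R0 r : R) : R :=
  let m := mexp n in let L := Lconst n in
  L * Rpower r (- m) - b * Rpower r (- l) * ln (r / R0).

Definition v_out (n l b R0 r : R) : R :=
  let m := mexp n in let L := Lconst n in
  m*(n-2-m)*L*Rpower r (-m-2)
  + (- l*(n-2-l) * ln (r / R0) + (n-2-2*l)) * b * Rpower r (-l-2).

Definition w_out (n l b R0 r : R) : R :=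
  let m := mexp n in let L := Lconst n in
  m*(m+2)*(n-2-m)*(n-4-m)*L*Rpower r (-m-4)
  - l*(l+2)*(n-2-l)*(n-4-l)*b*Rpower r (-l-4) * ln (r / R0)
  + (n-2-2*l)*(l+2)*(n-4-l)*b*Rpower r (-l-4).

(* Main.v *)
Require Import Defs.
From Stdlib Require Import Reals Lra Psatz.
Open Scope R_scope.

Lemma cbrt_neg a : a < 0 -> cbrt a < 0 /\ (cbrt a)^3 = a.
Proof.
  intro Ha. unfold cbrt. destruct (Rlt_dec 0 a); [lra|].
  destruct (Rlt_dec a 0); [|lra].
  assert (Hw : 0 < Rpower (-a) (1/3)) by (unfold Rpower; apply exp_pos).
  split; [lra|].
  assert (H3 : Rpower (-a) (1/3) ^ 3 = -a).
  { rewrite <- Rpower_pow by exact Hw. rewrite Rpower_mult.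
    replace (1/3 * INR 3) with 1 by (simpl; field). apply Rpower_1; lra. }
  replace ((- Rpower (- a) (1 / 3)) ^ 3) with (- (Rpower (-a) (1/3) ^ 3)) by ring.
  rewrite H3; ring.
Qed.

Ltac hornerpos := repeat (first [ lra | apply Rplus_le_le_0_compat | apply Rmult_le_pos ]).

Lemma s_lt_b (N : R) : 15 <= N ->
  sqrt (cbrt (K0 N + K1 N) + cbrt (K0 N - K1 N) + 3*N^2 + 32) < (N - 8) * sqrt 3.
Proof.
  intro HN. set (k := N - 15).
  assert (Hk : 0 <= k) by (unfold k; lra).
  assert (HN' : N = 15 + k) by (unfold k; ring).
  set (X := 192*N^2+256).
  assert (HX : 0 < X) by (unfold X; nra).
  assert (HK0 : K0 N < 0).
  { assert (E : K0 N = - (102676259 + k*(52183386 + k*(10679589 + k*(1141452 + k*(67581 + k*(2106 + k*27)))))) / 2) by (unfold K0; rewrite HN'; field).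
    assert (0 <= k*(52183386 + k*(10679589 + k*(1141452 + k*(67581 + k*(2106 + k*27)))))) by hornerpos.
    lra. }
  assert (Hdisc : 0 <= (2 * K0 N)^2 - 4 * (192*N^2 + 256)^3).
  { assert (E : (2 * K0 N)^2 - 4 * (192*N^2 + 256)^3 = 10214160759983817 + k*(10585461850409628 + k*(4894534148604354 + k*(1347076448060364 + k*(246965545626615 + k*(31863611628216 + k*(2971699904988 + k*(202081266936 + k*(9951685191 + k*(346289580 + k*(8084610 + k*(113724 + k*729)))))))))))) by (unfold K0; rewrite HN'; field).
    rewrite E.
    assert (0 <= 10214160759983817 + k*(10585461850409628 + k*(4894534148604354 + k*(1347076448060364 + k*(246965545626615 + k*(31863611628216 + k*(2971699904988 + k*(202081266936 + k*(9951685191 + k*(346289580 + k*(8084610 + k*(113724 + k*729)))))))))))) by hornerpos.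
    lra. }
  assert (HK1sq : K1 N * K1 N = K0 N ^2 - X^3).
  { unfold K1. replace (sqrt ((2 * K0 N) ^ 2 - 4 * (192 * N ^ 2 + 256) ^ 3) / 2 *
  (sqrt ((2 * K0 N) ^ 2 - 4 * (192 * N ^ 2 + 256) ^ 3) / 2)) with
  (sqrt ((2 * K0 N) ^ 2 - 4 * (192 * N ^ 2 + 256) ^ 3) *
  sqrt ((2 * K0 N) ^ 2 - 4 * (192 * N ^ 2 + 256) ^ 3) / 4) by field.
    rewrite sqrt_sqrt by exact Hdisc. unfold X. field. }
  assert (HK1 : 0 <= K1 N) by (unfold K1; apply Rmult_le_pos; [apply sqrt_pos| lra]).
  assert (Hp : K0 N + K1 N < 0).
  { assert (K1 N < - K0 N); [|lra].
    apply Rnot_le_lt; intro Hc. assert (HX3: 0 < X^3) by (apply pow_lt; lra). nra. }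
  destruct (cbrt_neg _ Hp) as [Hu Hu3].
  destruct (cbrt_neg (K0 N - K1 N)) as [Hv Hv3]; [lra|].
  set (u := cbrt (K0 N + K1 N)) in *. set (v := cbrt (K0 N - K1 N)) in *.
  assert (Huv : u * v = X).
  { assert (Hc : (u*v)^3 = X^3).
    { replace ((u*v)^3) with (u^3 * v^3) by ring. rewrite Hu3, Hv3. nra. }
    assert (Huvp : 0 < u*v) by nra.
    assert (Hf : (u*v - X) * ((u*v)^2 + (u*v)*X + X^2) = 0) by (ring_simplify; nra).
    apply Rmult_integral in Hf. destruct Hf as [Hf|Hf]; [lra|nra]. }
  set (y := u + v).
  assert (Hy : y^3 - 3*X*y - 2*K0 N = 0).
  { unfold y. replace ((u+v)^3) with (u^3 + v^3 + 3*(u*v)*(u+v)) by ring.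
    rewrite Hu3, Hv3, Huv. ring. }
  set (y0 := 160 - 48*N).
  assert (HF0 : 0 < y0^3 - 3*X*y0 - 2*K0 N).
  { assert (E : y0^3 - 3*X*y0 - 2*K0 N = 66339 + k*(22959450 + k*(7960869 + k*(1058508 + k*(67581 + k*(2106 + k*27)))))) by (unfold y0, X, K0; rewrite HN'; field).
    rewrite E.
    assert (0 <= k*(22959450 + k*(7960869 + k*(1058508 + k*(67581 + k*(2106 + k*27)))))) by hornerpos.
    lra. }
  assert (Hq : 0 < y^2 + y*y0 + y0^2 - 3*X).
  { assert (0 < 3*y0^2 - 12*X).
    { assert (E : 3*y0^2 - 12*X = 419328 + k*(92160 + k*4608)) by (unfold y0, X; rewrite HN'; ring).
      rewrite E. assert (0 <= k*(92160 + k*4608)) by hornerpos. lra. }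
    assert (0 <= (y + y0/2)^2) by apply pow2_ge_0. nra. }
  assert (Hyy0 : y < y0).
  { assert (Hfac : (y - y0) * (y^2 + y*y0 + y0^2 - 3*X) = - (y0^3 - 3*X*y0 - 2*K0 N)).
    { replace ((y - y0) * (y^2 + y*y0 + y0^2 - 3*X)) with ((y^3 - 3*X*y - 2*K0 N) - (y0^3 - 3*X*y0 - 2*K0 N)) by ring.
      rewrite Hy. ring. }
    nra. }
  assert (H3 : sqrt 3 * sqrt 3 = 3) by (apply sqrt_sqrt; lra).
  assert (H3p : 0 < sqrt 3) by (apply sqrt_lt_R0; lra).
  assert (Hb : 0 < (N - 8) * sqrt 3) by nra.
  change (cbrt (K0 N + K1 N) + cbrt (K0 N - K1 N)) with y.
  set (z := y + 3 * N ^ 2 + 32).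
  destruct (Rle_or_lt z 0) as [Hz|Hz].
  - rewrite sqrt_neg_0 by exact Hz. exact Hb.
  - assert (Hs := sqrt_sqrt z (Rlt_le _ _ Hz)).
    assert (Hs0 := sqrt_pos z).
    assert (Hzb : z < ((N-8)*sqrt 3)^2).
    { replace (((N-8)*sqrt 3)^2) with ((N-8)^2 * (sqrt 3 * sqrt 3)) by ring. rewrite H3.
      unfold z. unfold y0 in Hyy0. nra. }
    nra.
Qed.

Definition Qf (N s : R) : R := s*(s+2)*(s+4)*(N-2-s)*(N-4-s)*(N-6-s).

Lemma Q_max N s : 15 <= N -> Qf N s <= Qf N ((N-6)/2).
Proof.
  intro HN. set (t := s*(N-6-s)). set (T := (N-6)^2/4).
  assert (E1 : Qf N s = t*(t+(2*N-8))*(t+(4*N-8))) by (unfold Qf, t; ring).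
  assert (E2 : Qf N ((N-6)/2) = T*(T+(2*N-8))*(T+(4*N-8))) by (unfold Qf, T; field).
  assert (HtT : t <= T).
  { assert (T - t = (s - (N-6)/2)^2) by (unfold T, t; field). assert (0 <= (s - (N-6)/2)^2) by apply pow2_ge_0. lra. }
  assert (HT : 0 < T) by (unfold T; nra).
  rewrite E1, E2.
  assert (HTa : 0 <= T*(T+(2*N-8))) by nra.
  assert (HTpos : 0 <= T*(T+(2*N-8))*(T+(4*N-8))) by nra.
  destruct (Rle_or_lt 0 t) as [H0|H0].
  - assert (t*(t+(2*N-8)) <= T*(T+(2*N-8))) by (apply Rmult_le_compat; lra).
    apply Rmult_le_compat; nra.
  - destruct (Rle_or_lt (-(2*N-8)) t) as [H1|H1].
    + assert (t*(t+(2*N-8)) <= 0) by nra. nra.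
    + destruct (Rle_or_lt (-(4*N-8)) t) as [H2|H2].
      *
        assert (Hp : (-(t+(2*N-8)))*(t+(4*N-8)) <= N^2).
        { assert (0 <= (t + 3*N - 8)^2) by apply pow2_ge_0. nra. }
        assert (Hq : 0 <= (-(t+(2*N-8)))*(t+(4*N-8))) by nra.
        assert (Hl : t*(t+(2*N-8))*(t+(4*N-8)) <= (4*N-8)*N^2).
        { replace (t*(t+(2*N-8))*(t+(4*N-8))) with ((-t)*((-(t+(2*N-8)))*(t+(4*N-8)))) by ring.
          apply Rmult_le_compat; lra. }
        assert (HTT : N^2 <= T*(T+(2*N-8))).
        { assert (E3 : T*(T+(2*N-8)) = ((N-6)*(N-2))^2/16) by (unfold T; field).
          rewrite E3. assert (4*N <= (N-6)*(N-2)) by nra.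
          assert (0 <= 4*N) by lra.
          assert ((4*N)^2 <= ((N-6)*(N-2))^2) by (apply pow_incr; lra). nra. }
        assert ((4*N-8)*N^2 <= T*(T+(2*N-8))*(T+(4*N-8))).
        { rewrite (Rmult_comm (T*(T+(2*N-8)))). apply Rmult_le_compat; nra. }
        lra.
      * assert (0 < (-t)*(-(t+(2*N-8)))) by nra.
        assert (t*(t+(2*N-8))*(t+(4*N-8)) < 0) by nra. lra.
Qed.

Lemma m_facts N : 15 <= N ->
  0 < mexp N /\ mexp N < (N-6)/2 /\ 1 < pJL6 N.
Proof.
  intro HN.
  assert (Hs := s_lt_b N HN).
  set (S := sqrt (cbrt (K0 N + K1 N) + cbrt (K0 N - K1 N) + 3*N^2 + 32)) in *.
  assert (HS0 : 0 <= S) by apply sqrt_pos.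
  assert (H3p : 0 < sqrt 3) by (apply sqrt_lt_R0; lra).
  assert (Ep : pJL6 N = ((N + 4) * sqrt 3 - S) / ((N - 8) * sqrt 3 - S)) by reflexivity.
  assert (Ep1 : pJL6 N - 1 = 12 * sqrt 3 / ((N - 8) * sqrt 3 - S)) by (rewrite Ep; field; lra).
  assert (Em : mexp N = ((N - 8) * sqrt 3 - S) / (2 * sqrt 3)).
  { unfold mexp. rewrite Ep1. field. lra. }
  rewrite Em. split; [|split].
  - apply Rdiv_lt_0_compat; lra.
  - apply Rmult_lt_reg_r with (2 * sqrt 3); [lra|].
    unfold Rdiv. rewrite Rmult_assoc, Rinv_l by lra. nra.
  - assert (0 < pJL6 N - 1); [|lra]. rewrite Ep1. apply Rdiv_lt_0_compat; lra.
Qed.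

Lemma Ppoly_eq N lam : 15 <= N ->
  Ppoly N lam = Qf N (mexp N + lam) - pJL6 N * Qf N (mexp N).
Proof.
  intro HN. destruct (m_facts N HN) as [Hm [Hm2 Hp]].
  assert (HQ : 0 < Qf N (mexp N)).
  { unfold Qf. set (m := mexp N) in *.
    assert (0 < m*(m+2)*(m+4)) by (apply Rmult_lt_0_compat; [apply Rmult_lt_0_compat|]; lra).
    assert (0 < (N-2-m)*(N-4-m)*(N-6-m)) by (apply Rmult_lt_0_compat; [apply Rmult_lt_0_compat|]; lra).
    nra. }
  assert (EL : Rpower (Lconst N) (pJL6 N - 1) = Qf N (mexp N)).
  { unfold Lconst. cbv zeta. rewrite Rpower_mult.
    replace (1 / (pJL6 N - 1) * (pJL6 N - 1)) with 1 by (field; lra).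
    apply Rpower_1. exact HQ. }
  unfold Ppoly. cbv zeta. rewrite EL. unfold Qf. ring.
Qed.

Lemma lam_bound N lam3 : 15 <= N -> 0 < lam3 -> Ppoly N lam3 = 0 ->
  (forall lam, 0 < lam < lam3 -> Ppoly N lam <> 0) ->
  mexp N + lam3 <= (N-6)/2.
Proof.
  intros HN Hl Hr Hmin.
  destruct (m_facts N HN) as [Hm [Hm2 Hp]].
  set (m := mexp N) in *. set (p := pJL6 N) in *.
  assert (HQ : 0 < Qf N m).
  { unfold Qf.
    assert (0 < m*(m+2)*(m+4)) by (apply Rmult_lt_0_compat; [apply Rmult_lt_0_compat|]; lra).
    assert (0 < (N-2-m)*(N-4-m)*(N-6-m)) by (apply Rmult_lt_0_compat; [apply Rmult_lt_0_compat|]; lra).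
    nra. }
  set (g := fun lam => Qf N (m + lam) - p * Qf N m).
  assert (Eg : forall lam, Ppoly N lam = g lam) by (intro; unfold g, m, p; apply Ppoly_eq; exact HN).
  set (d := (N-6)/2 - m).
  assert (Hd : 0 < d) by (unfold d; lra).
  assert (Hgd : 0 <= g d).
  { apply Rnot_lt_le; intro Hc. unfold g, d in Hc.
    replace (m + ((N-6)/2 - m)) with ((N-6)/2) in Hc by ring.
    assert (H1 := Q_max N (m + lam3) HN).
    rewrite Eg in Hr. unfold g in Hr. lra. }
  apply Rnot_lt_le; intro Hc.
  assert (Hdl : d < lam3) by (unfold d; lra).
  destruct (Req_dec (g d) 0) as [Hz|Hz].
  - apply (Hmin d); [lra|]. rewrite Eg. exact Hz.
  - assert (Hg0 : g 0 < 0).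
    { unfold g. rewrite Rplus_0_r. nra. }
    assert (Hcont : continuity g) by (unfold g, Qf; reg).
    destruct (IVT g 0 d Hcont Hd Hg0) as [z [Hz1 Hz2]]; [lra|].
    assert (z <> 0) by (intro; subst z; lra).
    apply (Hmin z); [lra|]. rewrite Eg. exact Hz2.
Qed.

Lemma cont_pos f x : continuity f -> 0 < f x ->
  exists d, 0 < d /\ forall y, Rabs (y - x) < d -> 0 < f y.
Proof.
  intros Hc Hfx. assert (H := Hc x).
  unfold continuity_pt, continue_in, limit1_in, limit_in in H.
  destruct (H (f x) Hfx) as [a [Ha H']]. exists a. split; [exact Ha|].
  intros y Hy. destruct (Req_dec y x) as [E|E]; [subst; exact Hfx|].
  assert (Hd : Rabs (f y - f x) < f x).
  { apply (H' y). split; [split; [exact I| auto]| exact Hy]. }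
  apply Rabs_def2 in Hd. lra.
Qed.

Lemma exp_quad t : 0 <= t -> t^2/4 <= exp t.
Proof.
  intro Ht. destruct (Req_dec t 0) as [E|E].
  - subst. rewrite exp_0. lra.
  - assert (H1 := exp_ineq1 (t/2) ltac:(lra)).
    assert (E2 : exp t = exp (t/2) * exp (t/2)) by (rewrite <- exp_plus; f_equal; field).
    rewrite E2. nra.
Qed.

Section LR.
Variables (al be ka la K : R).
Definition ff (x : R) := al * x - be - ka * exp (la * (x - K)).

Lemma ff_cont : continuity ff.
Proof. unfold ff. reg. Qed.

Lemma last_root x0 : 0 < ka -> 0 < la -> 0 <= ff x0 ->
  exists xs, x0 <= xs /\ ff xs = 0 /\ forall x, 0 <= ff x -> x <= xs.
Proof.
  intros Hk Hl H0.
  set (M := Rabs al + Rabs (al*K - be) + 1).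
  set (Z := 4*M/(ka*la^2) + 1).
  assert (HM : 1 <= M) by (unfold M; assert (H1 := Rabs_pos al); assert (H2 := Rabs_pos (al*K - be)); lra).
  assert (Hkl : 0 < ka*la^2) by (apply Rmult_lt_0_compat; [lra| apply pow_lt; lra]).
  assert (HZ1 : 1 <= Z) by (unfold Z; assert (0 <= 4*M/(ka*la^2)) by (apply Rlt_le, Rdiv_lt_0_compat; lra); lra).
  assert (HZM : M <= ka*la^2*Z/4).
  { unfold Z. replace (ka * la ^ 2 * (4 * M / (ka * la ^ 2) + 1) / 4) with (M + ka*la^2/4) by (field; lra). lra. }
  assert (Hbd : forall x, 0 <= ff x -> x <= K + Z).
  { intros x Hx. apply Rnot_lt_le. intro Hc. unfold ff in Hx.
    set (z := x - K) in *.
    assert (Hz : Z < z) by (unfold z; lra).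
    assert (He := exp_quad (la*z) ltac:(nra)).
    assert (Hq : M*z <= ka * ((la*z)^2/4)).
    { replace (ka * ((la*z)^2/4)) with ((ka*la^2*z/4)*z) by field.
      apply Rmult_le_compat_r; [lra|]. nra. }
    assert (Hexp : ka * ((la*z)^2/4) <= ka * exp (la*z)) by (apply Rmult_le_compat_l; lra).
    assert (Ha1 := Rle_abs al). assert (Ha2 := Rle_abs (al*K - be)).
    assert (Ha3 := Rabs_pos al). assert (Ha4 := Rabs_pos (al*K-be)).
    assert (al*x - be = al*z + (al*K - be)) by (unfold z; ring).
    assert (al*z <= Rabs al * z) by (apply Rmult_le_compat_r; lra).
    assert (al*K - be <= Rabs (al*K-be) * z) by nra.
    unfold M in Hq. nra. }
  destruct (completeness (fun x => 0 <= ff x)) as [xs [Hub Hlub]].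
  { exists (K + Z). intros x Hx. apply Hbd. exact Hx. }
  { exists x0. exact H0. }
  exists xs. split; [apply Hub; exact H0|]. split.
  - destruct (Rtotal_order (ff xs) 0) as [Hn|[He|Hp]]; [|exact He|].
    + set (g := fun x => - ff x).
      assert (Hg : continuity g) by (unfold g; apply continuity_opp; apply ff_cont).
      destruct (cont_pos g xs Hg) as [d [Hd Hy]]; [unfold g; lra|].
      assert (xs <= xs - d/2); [|lra].
      apply Hlub. intros x Hx. assert (x <= xs) by (apply Hub; exact Hx).
      apply Rnot_lt_le; intro Hc.
      assert (0 < g x) by (apply Hy; rewrite Rabs_left1 by lra; lra).
      unfold g in *; lra.
    + destruct (cont_pos ff xs ff_cont Hp) as [d [Hd Hy]].
      assert (xs + d/2 <= xs); [|lra].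
      apply Hub. left. apply Hy. rewrite Rabs_right by lra. lra.
  - intros x Hx. apply Hub. exact Hx.
Qed.
End LR.

Lemma transfer (r0 xs : R) (Pr : R -> Prop) (f : R -> R) :
  (forall x, Pr (exp r0 * exp x) <-> 0 <= f x) -> 0 <= f xs ->
  (forall x, 0 <= f x -> x <= xs) ->
  is_lub (fun r => 0 < r /\ Pr r) (exp r0 * exp xs).
Proof.
  intros HP Hxs Hmax. split.
  - intros r [Hr HPr].
    assert (Er : r = exp r0 * exp (ln r - r0)).
    { rewrite <- exp_plus. replace (r0 + (ln r - r0)) with (ln r) by ring. rewrite exp_ln; auto. }
    rewrite Er in HPr. apply HP in HPr. apply Hmax in HPr.
    rewrite Er. apply Rmult_le_compat_l; [left; apply exp_pos|].
    destruct HPr as [H|H]; [left; apply exp_increasing; exact H| rewrite H; right; reflexivity].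
  - intros bd Hbd. apply Hbd. split.
    + apply Rmult_lt_0_compat; apply exp_pos.
    + apply HP. exact Hxs.
Qed.

Section Tr.
Variables (N m l b L K : R).
Hypotheses (Hb : 0 < b) (HL : 0 < L) (Hlm : 0 < l - m).
Let la := l - m.
Let r0 := (ln b - ln L)/la - K.

Lemma Rp_e x y : Rpower (exp r0 * exp x) y = exp (y * (r0 + x)).
Proof. unfold Rpower. f_equal. f_equal. rewrite ln_mult by apply exp_pos. rewrite !ln_exp. ring. Qed.

Lemma ln_e x : ln (exp r0 * exp x / exp r0) = x.
Proof. replace (exp r0 * exp x / exp r0) with (exp x) by (field; apply Rgt_not_eq, exp_pos). apply ln_exp. Qed.

Lemma key x : L * exp (la * (r0 + x)) = b * exp (la * (x - K)).
Proof.
  replace (la * (r0 + x)) with ((ln b - ln L) + la*(x-K)) by (unfold r0; field; unfold la; lra).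
  rewrite exp_plus. unfold Rminus at 1. rewrite exp_plus. rewrite exp_Ropp, !exp_ln by auto.
  field. lra.
Qed.

Lemma split_e k x : exp ((-m-k) * (r0 + x)) = exp ((-l-k)*(r0+x)) * exp (la*(r0+x)).
Proof. rewrite <- exp_plus. f_equal. unfold la. ring. Qed.

Lemma tr_gen (U c fx : R) : 0 < c -> U = - c * fx -> (U <= 0 <-> 0 <= fx).
Proof. intros Hc HU. subst U. split; intro H; nra. Qed.
End Tr.

Section Tr2.
Variables (N l b K : R).
Hypotheses (Hb : 0 < b) (Hlm : 0 < l - mexp N).
Let m := mexp N.
Let L := Lconst N.
Let la := l - m.
Let r0 := (ln b - ln L)/la - K.
Lemma HL : 0 < L.
Proof. unfold L, Lconst, Rpower. apply exp_pos. Qed.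

Lemma tr_u x : u_out N l b (exp r0) (exp r0 * exp x) <= 0 <-> 0 <= ff 1 0 1 la K x.
Proof.
  unfold u_out. cbv zeta. fold m L. unfold r0, la.
  rewrite !Rp_e, ln_e.
  fold la. fold r0.
  apply tr_gen with (c := exp ((-l) * (r0 + x)) * b).
  - apply Rmult_lt_0_compat; [apply exp_pos| exact Hb].
  - assert (E1 : exp (- m * (r0 + x)) = exp (-l*(r0+x)) * exp (la*(r0+x))) by (rewrite <- exp_plus; f_equal; unfold la; ring).
    rewrite E1. assert (E2 := key m l b L K Hb HL Hlm x). fold la r0 in E2.
    unfold ff. replace (L * (exp (- l * (r0 + x)) * exp (la * (r0 + x)))) with (exp (- l * (r0 + x)) * (L * exp (la * (r0 + x)))) by ring.
    rewrite E2. ring.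
Qed.

Lemma tr_v x : v_out N l b (exp r0) (exp r0 * exp x) <= 0 <->
  0 <= ff (l*(N-2-l)) (N-2-2*l) (m*(N-2-m)) la K x.
Proof.
  unfold v_out. cbv zeta. fold m L. unfold r0, la.
  rewrite !Rp_e, ln_e.
  fold la. fold r0.
  apply tr_gen with (c := exp ((-l-2) * (r0 + x)) * b).
  - apply Rmult_lt_0_compat; [apply exp_pos| exact Hb].
  - assert (E1 : exp ((- m - 2) * (r0 + x)) = exp ((-l-2)*(r0+x)) * exp (la*(r0+x))) by (rewrite <- exp_plus; f_equal; unfold la; ring).
    rewrite E1. assert (E2 := key m l b L K Hb HL Hlm x). fold la r0 in E2.
    unfold ff. replace (m * (N - 2 - m) * L * (exp ((- l - 2) * (r0 + x)) * exp (la * (r0 + x)))) with (m * (N - 2 - m) * exp ((- l - 2) * (r0 + x)) * (L * exp (la * (r0 + x)))) by ring.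
    rewrite E2. ring.
Qed.

Lemma tr_w x : w_out N l b (exp r0) (exp r0 * exp x) <= 0 <->
  0 <= ff (l*(l+2)*(N-2-l)*(N-4-l)) ((N-2-2*l)*(l+2)*(N-4-l)) (m*(m+2)*(N-2-m)*(N-4-m)) la K x.
Proof.
  unfold w_out. cbv zeta. fold m L. unfold r0, la.
  rewrite !Rp_e, ln_e.
  fold la. fold r0.
  apply tr_gen with (c := exp ((-l-4) * (r0 + x)) * b).
  - apply Rmult_lt_0_compat; [apply exp_pos| exact Hb].
  - assert (E1 : exp ((- m - 4) * (r0 + x)) = exp ((-l-4)*(r0+x)) * exp (la*(r0+x))) by (rewrite <- exp_plus; f_equal; unfold la; ring).
    rewrite E1. assert (E2 := key m l b L K Hb HL Hlm x). fold la r0 in E2.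
    unfold ff. replace (m * (m + 2) * (N - 2 - m) * (N - 4 - m) * L * (exp ((- l - 4) * (r0 + x)) * exp (la * (r0 + x)))) with (m * (m + 2) * (N - 2 - m) * (N - 4 - m) * exp ((- l - 4) * (r0 + x)) * (L * exp (la * (r0 + x)))) by ring.
    rewrite E2. ring.
Qed.
End Tr2.

Theorem lemma4p1 (n : nat) (b lam3 : R)
  (Hn : (15 <= n)%nat) (Hb : 0 < b)
  (Hlam_pos : 0 < lam3)
  (Hlam_root : Ppoly (INR n) lam3 = 0)
  (Hlam_min : forall lam, 0 < lam < lam3 -> Ppoly (INR n) lam <> 0) :
  let l := mexp (INR n) + lam3 in
  exists R0 : R, 0 < R0 /\
    exists r1 r2 r3 : R,
      is_lub (fun r => 0 < r /\ u_out (INR n) l b R0 r <= 0) r1 /\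
      is_lub (fun r => 0 < r /\ v_out (INR n) l b R0 r <= 0) r2 /\
      is_lub (fun r => 0 < r /\ w_out (INR n) l b R0 r <= 0) r3 /\
      R0 < r1 /\ r1 < r2 /\ r2 < r3.
Proof.
  intro l.
  assert (HN : 15 <= INR n).
  { apply le_INR in Hn. rewrite INR_IZR_INZ in Hn. simpl in Hn. exact Hn. }
  assert (Hlb := lam_bound (INR n) lam3 HN Hlam_pos Hlam_root Hlam_min).
  fold l in Hlb.
  destruct (m_facts (INR n) HN) as [Hm [Hm2 Hp]].
  set (N := INR n) in *.
  set (m := mexp N) in *.
  assert (Hlm : 0 < l - m) by (unfold l, m; lra).
  set (la := l - m).
  set (A := m*(N-2-m)). set (B := l*(N-2-l)). set (C := N-2-2*l).
  set (D := m*(m+2)*(N-2-m)*(N-4-m)). set (Ew := l*(l+2)*(N-2-l)*(N-4-l)).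
  set (F := (N-2-2*l)*(l+2)*(N-4-l)).
  assert (HA : 0 < A) by (unfold A; apply Rmult_lt_0_compat; lra).
  assert (HB : 0 < B) by (unfold B; apply Rmult_lt_0_compat; lra).
  assert (HBA : 0 < B - A).
  { replace (B - A) with ((l-m)*(N-2-l-m)) by (unfold A, B; ring). apply Rmult_lt_0_compat; lra. }
  assert (HDA : D = A*((m+2)*(N-4-m))) by (unfold D, A; ring).
  assert (HEB : Ew = B*((l+2)*(N-4-l))) by (unfold Ew, B; ring).
  assert (HD : 0 < D) by (rewrite HDA; apply Rmult_lt_0_compat; [lra| apply Rmult_lt_0_compat; lra]).
  assert (HAE : 0 < A*Ew - D*B).
  { replace (A*Ew - D*B) with (A*B*((l-m)*(N-6-l-m))) by (rewrite HDA, HEB; ring).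
    apply Rmult_lt_0_compat; [apply Rmult_lt_0_compat; lra|apply Rmult_lt_0_compat; lra]. }
  set (K := 1 + Rabs C/(B-A) + Rabs (A*F - D*C)/(A*Ew - D*B)).
  assert (HK1 : 0 <= Rabs C/(B-A)) by (apply Rmult_le_pos; [apply Rabs_pos| left; apply Rinv_0_lt_compat; lra]).
  assert (HK2 : 0 <= Rabs (A*F - D*C)/(A*Ew - D*B)) by (apply Rmult_le_pos; [apply Rabs_pos| left; apply Rinv_0_lt_compat; lra]).
  assert (HK : 1 <= K) by (unfold K; lra).
  set (r0 := (ln b - ln (Lconst N))/la - K).
  exists (exp r0). split; [apply exp_pos|].
  destruct (last_root 1 0 1 la K K ltac:(lra) Hlm) as [x1 [Hx1K [Hx1 Hx1m]]].
  { unfold ff. replace (la*(K-K)) with 0 by ring. rewrite exp_0. lra. }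
  assert (E1 : exp (la*(x1-K)) = x1) by (unfold ff in Hx1; lra).
  assert (Hf2 : 0 < ff B C A la K x1).
  { unfold ff. rewrite E1.
    assert (Rabs C < (B-A)*x1); [|assert (Hc := Rle_abs C); nra].
    assert (Rabs C / (B-A) < x1) by (unfold K in Hx1K; lra).
    apply (Rmult_lt_compat_l (B-A)) in H; [|lra].
    unfold Rdiv in H. rewrite <- Rmult_assoc, (Rmult_comm (B-A)), Rmult_assoc, Rinv_r in H by lra. lra. }
  destruct (last_root B C A la K x1 HA Hlm ltac:(lra)) as [x2 [Hx12 [Hx2 Hx2m]]].
  assert (Hx12' : x1 < x2) by (destruct Hx12 as [H|H]; [exact H| subst x2; lra]).
  assert (E2 : A * exp (la*(x2-K)) = B*x2 - C) by (unfold ff in Hx2; lra).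
  assert (Hf3 : 0 < ff Ew F D la K x2).
  { assert (Hx2K : K <= x2) by lra.
    assert (0 < A * ff Ew F D la K x2); [|nra].
    replace (A * ff Ew F D la K x2) with ((A*Ew - D*B)*x2 - (A*F - D*C)) by (unfold ff; replace (A * (Ew * x2 - F - D * exp (la * (x2 - K)))) with (A*Ew*x2 - A*F - D*(A * exp (la*(x2-K)))) by ring; rewrite E2; ring).
    assert (Rabs (A*F - D*C) < (A*Ew - D*B)*x2); [|assert (Hc := Rle_abs (A*F - D*C)); nra].
    assert (H : Rabs (A*F - D*C) / (A*Ew - D*B) < x2) by (unfold K in Hx2K; lra).
    apply (Rmult_lt_compat_l (A*Ew - D*B)) in H; [|lra].
    unfold Rdiv in H. rewrite <- Rmult_assoc, (Rmult_comm (A*Ew - D*B)), Rmult_assoc, Rinv_r in H by lra. lra. }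
  destruct (last_root Ew F D la K x2 HD Hlm ltac:(lra)) as [x3 [Hx23 [Hx3 Hx3m]]].
  assert (Hx23' : x2 < x3) by (destruct Hx23 as [H|H]; [exact H| subst x3; lra]).
  exists (exp r0 * exp x1), (exp r0 * exp x2), (exp r0 * exp x3).
  split; [|split; [|split; [|split; [|split]]]].
  - apply transfer with (f := ff 1 0 1 la K); [|lra|exact Hx1m].
    intro x. apply (tr_u N l b K Hb Hlm x).
  - apply transfer with (f := ff B C A la K); [|lra|exact Hx2m].
    intro x. apply (tr_v N l b K Hb Hlm x).
  - apply transfer with (f := ff Ew F D la K); [|lra|exact Hx3m].
    intro x. apply (tr_w N l b K Hb Hlm x).
  - assert (1 < exp x1) by (rewrite <- exp_0; apply exp_increasing; lra).
    assert (0 < exp r0) by apply exp_pos. nra.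
  - apply Rmult_lt_compat_l; [apply exp_pos| apply exp_increasing; exact Hx12'].
  - apply Rmult_lt_compat_l; [apply exp_pos| apply exp_increasing; exact Hx23'].
Qed.
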